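(* Let $A$ be an augmented dga, $\mathfrak a\lhd A$ an ideal and $C$ a cocomplete coaugmented dgc. Being related by an $\mathfrak a$-trivial homotopy is an equivalence relation on twisting cochains $C\to A$. More precisely: (i) if $h\colon t\simeq u$ and $k\colon u\simeq v$ are $\mathfrak a$-trivial twisting cochain homotopies, then $h\cup k$ is an $\mathfrak a$-trivial homotopy from $t$ to $v$; (ii) if $h\colon t\simeq u$ is an $\mathfrak a$-trivial twisting cochain homotopy, then $h$ is invertible in $\operatorname{Hom}_0(C,A)$ with inverse $h^{-1}=\sum_{n=0}^\infty(1-h)^{\cup n}$, and $h^{-1}$ is an $\mathfrak a$-trivial homotopy from $u$ to $t$.
   Context: An ideal means a two-sided differential ideal. $\operatorname{Hom}(C,A)$ is an augmented dga with cup product $f\cup g=\mu_A(f\otimes g)\Delta_C$, unit $1=\eta_A\epsilon_C$. $C$ is cocomplete if for each $c\in C$ some $n$ has $(1_C-\epsilon_C)^{\otimes n}\Delta^{(n)}(c)=0$ (iterated diagonal). A twisting cochain is $t\in\operatorname{Hom}^1(C,A)$ with $d(t)=t\cup t$, $\epsilon_At=0$, $t\eta_C=0$. A twisting cochain homotopy $h\colon t\simeq u$ is $h\in\operatorname{Hom}_0(C,A)$ with $d(h)=t\cup h-h\cup u$, $\epsilon_Ah=\epsilon_C$, $h\eta_C=\eta_A$; it is $\mathfrak a$-trivial if $h\equiv\eta_A\epsilon_C\pmod{\mathfrak a}$. *)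

(* Defs.v *)
(* Differential graded (co)algebras over a commutative ring k,
   encoded without a tensor-product library: graded modules are total modules
   with a direct-sum decomposition given by projections; elements of tensor
   powers are represented by finite lists of simple tensors, and equality of
   tensors is tested through the universal property (all multilinear maps). *)
From HB Require Import structures.
From mathcomp Require Import all_boot all_order all_algebra.
Set Implicit Arguments. Unset Strict Implicit. Unset Printing Implicit Defensive.
Import Order.TTheory GRing.Theory Num.Theory.
Local Open Scope ring_scope.

Section Defs.
Variable k : comNzRingType.

Definition islinear (U V : lmodType k) (f : U -> V) :=
  forall (a : k) (x y : U), f (a *: x + y) = a *: f x + f y.

(* A Z-grading M = (+)_i M_i of a k-module M, given by the projections onto
   the homogeneous components; every element has finite support. *)
Record grading (M : lmodType k) := Grading {
  gproj : int -> M -> M;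
  gsupp : M -> seq int;
  gproj_lin : forall i, islinear (gproj i);
  gproj_proj : forall i j x, gproj i (gproj j x) = if i == j then gproj j x else 0;
  gsupp_uniq : forall x, uniq (gsupp x);
  gdecomp : forall x, x = \sum_(i <- gsupp x) gproj i x }.

Definition gsign (M : lmodType k) (G : grading M) (e : int) (x : M) : M :=
  \sum_(i <- gsupp G x) ((-1) ^+ absz (e * i)) *: gproj G i x.

(* Tensors in M^{(x)m}: finite sums of simple tensors (lists of factors). *)
Definition multilinear (M W : lmodType k) (phi : seq M -> W) :=
  forall (l r : seq M) (a : k) (x y : M),
    phi (l ++ (a *: x + y) :: r) = a *: phi (l ++ x :: r) + phi (l ++ y :: r).

Definition tev (M W : lmodType k) (phi : seq M -> W) (T : seq (seq M)) : W :=
  \sum_(s <- T) phi s.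

Definition teq (M : lmodType k) (T1 T2 : seq (seq M)) : Prop :=
  forall (W : lmodType k) (phi : seq M -> W),
    multilinear phi -> tev phi T1 = tev phi T2.

Definition dtens (C : lmodType k) (D : C -> seq (C * C)) (c : C) : seq (seq C) :=
  [seq [:: xy.1; xy.2] | xy <- D c].

Record dgc (C : lmodType k) := DGC {
  cgr : grading C;
  cdelta : C -> seq (C * C);       (* Delta c = sum of xy.1 (x) xy.2 *)
  ceps : C -> k;
  cd : C -> C;
  cone : C;                         (* coaugmentation eta_C(1) *)
  cdelta_lin : forall a x y,
    teq (dtens cdelta (a *: x + y))
        ([seq [:: a *: xy.1; xy.2] | xy <- cdelta x] ++ dtens cdelta y);
  cdelta_deg : forall n p q c, p + q != n ->
    teq [seq [:: gproj cgr p xy.1; gproj cgr q xy.2] | xy <- cdelta (gproj cgr n c)] [::];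
  cdelta_coass : forall c,
    teq (flatten [seq [seq [:: z.1; z.2; xy.2] | z <- cdelta xy.1] | xy <- cdelta c])
        (flatten [seq [seq [:: xy.1; z.1; z.2] | z <- cdelta xy.2] | xy <- cdelta c]);
  ceps_lin : forall a x y, ceps (a *: x + y) = a * ceps x + ceps y;
  ceps_deg : forall i c, i != 0 -> ceps (gproj cgr i c) = 0;
  counit_l : forall c, \sum_(xy <- cdelta c) ceps xy.1 *: xy.2 = c;
  counit_r : forall c, \sum_(xy <- cdelta c) ceps xy.2 *: xy.1 = c;
  cd_lin : islinear cd;
  cd_deg : forall i c, cd (gproj cgr i c) = gproj cgr (i + 1) (cd c);
  cd_sq : forall c, cd (cd c) = 0;
  ceps_d : forall c, ceps (cd c) = 0;
  cd_coder : forall c,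
    teq (dtens cdelta (cd c))
        ([seq [:: cd xy.1; xy.2] | xy <- cdelta c] ++
         [seq [:: gsign cgr 1 xy.1; cd xy.2] | xy <- cdelta c]);
  cone_deg : gproj cgr 0 cone = cone;
  cone_d : cd cone = 0;
  cone_eps : ceps cone = 1;
  cone_delta : teq (dtens cdelta cone) [:: [:: cone; cone]] }.

Record dga (A : algType k) := DGA {
  agr : grading A;
  ad : A -> A;
  aeps : A -> k;
  agr_one : gproj agr 0 1 = 1;
  agr_mul : forall i j x y,
    gproj agr (i + j) (gproj agr i x * gproj agr j y) = gproj agr i x * gproj agr j y;
  ad_lin : islinear ad;
  ad_deg : forall i x, ad (gproj agr i x) = gproj agr (i + 1) (ad x);
  ad_sq : forall x, ad (ad x) = 0;
  ad_leib : forall x y, ad (x * y) = ad x * y + gsign agr 1 x * ad y;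
  aeps_lin : forall a x y, aeps (a *: x + y) = a * aeps x + aeps y;
  aeps_mul : forall x y, aeps (x * y) = aeps x * aeps y;
  aeps_one : aeps 1 = 1;
  aeps_deg : forall i x, i != 0 -> aeps (gproj agr i x) = 0;
  aeps_d : forall x, aeps (ad x) = 0 }.

Section Hom.
Variables (A : algType k) (DA : dga A) (C : lmodType k) (DC : dgc C).

Definition dg_ideal (I : A -> Prop) : Prop :=
  I 0 /\
  (forall a x y, I x -> I y -> I (a *: x + y)) /\
  (forall x y, I y -> I (x * y)) /\
  (forall x y, I x -> I (x * y)) /\
  (forall x, I x -> I (ad DA x)) /\
  (forall i x, I x -> I (gproj (agr DA) i x)).

Fixpoint diter (n : nat) (c : C) : seq (seq C) :=
  match n with
  | 0 => [:: [:: c]]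
  | n'.+1 => flatten [seq match s with
                          | x :: r => [seq [:: z.1, z.2 & r] | z <- cdelta DC x]
                          | [::] => [:: [::]]
                          end | s <- diter n' c]
  end.
(* diter n c represents Delta^{(n+1)}(c) in C^{(x)(n+1)} *)

Definition cocomplete : Prop :=
  forall c : C, exists n : nat,
    teq [seq [seq x - ceps DC x *: cone DC | x <- s] | s <- diter n c] [::].

Definition homdeg (n : int) (f : C -> A) : Prop :=
  islinear f /\ forall i c, f (gproj (cgr DC) i c) = gproj (agr DA) (i + n) (f c).

(* cup product f \cup g = mu (f (x) g) Delta, where e is the degree of g *)
Definition cup (e : int) (f g : C -> A) (c : C) : A :=
  \sum_(xy <- cdelta DC c) f (gsign (cgr DC) e xy.1) * g xy.2.

Definition hone (c : C) : A := (ceps DC c)%:A.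

Definition hd (n : int) (f : C -> A) (c : C) : A :=
  ad DA (f c) - ((-1) ^+ absz n) *: f (cd DC c).

Definition twisting (t : C -> A) : Prop :=
  [/\ homdeg 1 t,
      (forall c, hd 1 t c = cup 1 t t c),
      (forall c, aeps DA (t c) = 0) &
      (forall a : k, t (a *: cone DC) = 0)].

Definition tc_homotopy (t u h : C -> A) : Prop :=
  [/\ homdeg 0 h,
      (forall c, hd 0 h c = cup 0 t h c - cup 1 h u c),
      (forall c, aeps DA (h c) = ceps DC c) &
      (forall a : k, h (a *: cone DC) = a%:A)].

Definition atrivial (I : A -> Prop) (h : C -> A) : Prop :=
  forall c, I (h c - hone c).

Definition atriv_homotopy (I : A -> Prop) (t u h : C -> A) : Prop :=
  tc_homotopy t u h /\ atrivial I h.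

Fixpoint cpow (f : C -> A) (n : nat) : C -> A :=
  match n with 0 => hone | n'.+1 => cup 0 f (cpow f n') end.

End Hom.
End Defs.

(* Main.v *)
Require Import Defs.
From HB Require Import structures.
From mathcomp Require Import all_boot all_order all_algebra zify.
From Stdlib Require Import ClassicalEpsilon.
Import GRing.Theory.
Local Open Scope ring_scope.
Set Implicit Arguments. Unset Strict Implicit.

Lemma oddabsz (p q : int) : odd (absz (p + q)) = odd (absz p) (+) odd (absz q).
Proof.
have E n : odd n = (n %% 2 == 1)%N by rewrite modn2; case: (odd n).
rewrite !E.
case: (absz p %% 2 == 1)%N / eqP => h1; case: (absz q %% 2 == 1)%N / eqP => h2 /=; apply/eqP; lia.
Qed.

Lemma sign_add (R : pzRingType) (p q : int) :
  (-1) ^+ absz (p + q) = (-1) ^+ absz p * (-1) ^+ absz q :> R.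
Proof. by rewrite -signr_odd oddabsz signr_addb !signr_odd. Qed.

Section Lin.
Variables (k : comNzRingType) (U V : lmodType k) (f : U -> V).
Hypothesis hf : islinear f.
Lemma lin0 : f 0 = 0.
Proof.
have H := hf 1 0 0; rewrite !scale1r addr0 in H.
by apply: (@addrI _ (f 0)); rewrite addr0 -H.
Qed.
Lemma linD x y : f (x + y) = f x + f y.
Proof. by have := hf 1 x y; rewrite !scale1r. Qed.
Lemma linZ a x : f (a *: x) = a *: f x.
Proof. by have := hf a x 0; rewrite !addr0 lin0 addr0. Qed.
Lemma linN x : f (- x) = - f x.
Proof. by rewrite -scaleN1r linZ scaleN1r. Qed.
Lemma linB x y : f (x - y) = f x - f y.
Proof. by rewrite linD linN. Qed.
Lemma lin_sum (I : Type) (s : seq I) (P : pred I) (F : I -> U) :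
  f (\sum_(i <- s | P i) F i) = \sum_(i <- s | P i) f (F i).
Proof. by apply: (big_ind2 (fun a b => f a = b)) => [|x1 x2 y1 y2 <- <-|]; rewrite ?lin0 ?linD. Qed.
End Lin.

Lemma lin_comp (k : comNzRingType) (U V W : lmodType k) (f : V -> W) (g : U -> V) :
  islinear f -> islinear g -> islinear (fun x => f (g x)).
Proof. by move=> hf hg a x y; rewrite hg hf. Qed.

Section Grading.
Variables (k : comNzRingType) (M : lmodType k) (G : grading M).

Lemma gp_lin i : islinear (gproj G i). Proof. exact: gproj_lin. Qed.

Lemma gp_out i x : i \notin gsupp G x -> gproj G i x = 0.
Proof.
move=> hi; rewrite (gdecomp G x) (lin_sum (gp_lin i)) big1_seq // => j /andP[_ hj].
rewrite gproj_proj; case: (i =P j) => // eij.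
by rewrite eij hj in hi.
Qed.

Lemma gsumS (W : zmodType) (F : int -> M -> W) x S :
  (forall i, F i 0 = 0) -> uniq S -> {subset gsupp G x <= S} ->
  \sum_(i <- S) F i (gproj G i x) = \sum_(i <- gsupp G x) F i (gproj G i x).
Proof.
move=> F0 uS sS.
rewrite (bigID (fun i => i \in gsupp G x)) /= [X in _ + X]big1 ?addr0; last first.
  by move=> i /gp_out ->.
rewrite -big_filter; apply: perm_big; apply: uniq_perm.
- by rewrite filter_uniq.
- exact: gsupp_uniq.
move=> i; rewrite mem_filter; apply/andP/idP => [[]//|h]; split => //; exact: sS.
Qed.

Lemma gdecompS x S : uniq S -> {subset gsupp G x <= S} ->
  x = \sum_(i <- S) gproj G i x.
Proof. by move=> uS sS; rewrite (@gsumS _ (fun _ v => v)) //; exact: gdecomp. Qed.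

Lemma gsignS e x S : uniq S -> {subset gsupp G x <= S} ->
  gsign G e x = \sum_(i <- S) ((-1) ^+ absz (e * i)) *: gproj G i x.
Proof.
move=> uS sS; rewrite /gsign (@gsumS _ (fun i v => ((-1) ^+ absz (e * i)) *: v) x S) //.
by move=> i; rewrite scaler0.
Qed.

Definition cov (l : seq M) := undup (flatten (map (gsupp G) l)).
Lemma cov_uniq l : uniq (cov l). Proof. exact: undup_uniq. Qed.
Lemma cov_sub l x : x \in l -> {subset gsupp G x <= cov l}.
Proof.
move=> xl i hi; rewrite mem_undup; apply/flattenP; exists (gsupp G x) => //.
exact: map_f.
Qed.

Lemma gsign_lin e : islinear (gsign G e).
Proof.
move=> a x y; set S := cov [:: x; y; a *: x + y].
rewrite !(@gsignS e _ S) ?cov_uniq //; try by apply: cov_sub; rewrite !inE eqxx ?orbT.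
rewrite scaler_sumr -big_split; apply: eq_bigr => i _.
by rewrite gp_lin scalerDr !scalerA mulrC.
Qed.

Lemma gsign0 x : gsign G 0 x = x.
Proof.
rewrite /gsign; under eq_bigr do rewrite mul0r /= expr0 scale1r.
by rewrite -gdecomp.
Qed.

Lemma gsign_hom e j x : gsign G e (gproj G j x) = (-1) ^+ absz (e * j) *: gproj G j x.
Proof.
rewrite (@gsignS e _ (undup (j :: gsupp G (gproj G j x)))) ?undup_uniq //; last first.
  by move=> i hi; rewrite mem_undup inE hi orbT.
rewrite (bigD1_seq j) ?undup_uniq ?mem_undup ?inE ?eqxx //= big1 ?addr0.
  by rewrite gproj_proj eqxx.
by move=> i /negPf ni; rewrite gproj_proj ni scaler0.
Qed.

End Grading.

Section Main.
Variables (k : comNzRingType) (A : algType k) (DA : dga A) (C : lmodType k) (DC : dgc C).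
Local Notation gpC := (gproj (cgr DC)).
Local Notation gpA := (gproj (agr DA)).
Local Notation sgC := (gsign (cgr DC)).
Local Notation sgA := (gsign (agr DA)).
Local Notation eps := (ceps DC).
Local Notation aep := (aeps DA).
Local Notation dl := (cdelta DC).
Local Notation one := (hone A DC).

Lemma eps_add x y : eps (x + y) = eps x + eps y.
Proof. by have := ceps_lin DC 1 x y; rewrite scale1r mul1r. Qed.
Lemma eps0 : eps 0 = 0.
Proof. by have := eps_add 0 0; rewrite addr0 => H; apply: (@addrI _ (eps 0)); by rewrite addr0 -H. Qed.
Lemma epsZ a x : eps (a *: x) = a * eps x.
Proof. by have := ceps_lin DC a x 0; rewrite !addr0 eps0 addr0. Qed.
Lemma eps_sum (I : Type) (s : seq I) (P : pred I) (F : I -> C) :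
  eps (\sum_(i <- s | P i) F i) = \sum_(i <- s | P i) eps (F i).
Proof. by apply: (big_ind2 (fun a b => eps a = b)) => [|x1 x2 y1 y2 <- <-|]; rewrite ?eps0 ?eps_add. Qed.

Lemma aep_add x y : aep (x + y) = aep x + aep y.
Proof. by have := aeps_lin DA 1 x y; rewrite scale1r mul1r. Qed.
Lemma aep0 : aep 0 = 0.
Proof. by have := aep_add 0 0; rewrite addr0 => H; apply: (@addrI _ (aep 0)); by rewrite addr0 -H. Qed.
Lemma aepZ a x : aep (a *: x) = a * aep x.
Proof. by have := aeps_lin DA a x 0; rewrite !addr0 aep0 addr0. Qed.
Lemma aep_sum (I : Type) (s : seq I) (P : pred I) (F : I -> A) :
  aep (\sum_(i <- s | P i) F i) = \sum_(i <- s | P i) aep (F i).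
Proof. by apply: (big_ind2 (fun a b => aep a = b)) => [|x1 x2 y1 y2 <- <-|]; rewrite ?aep0 ?aep_add. Qed.
Lemma aep_alg a : aep (a%:A) = a.
Proof. by rewrite aepZ aeps_one mulr1. Qed.
Lemma aepB x y : aep (x - y) = aep x - aep y.
Proof. by rewrite -scaleN1r aep_add aepZ mulN1r. Qed.

Lemma eps_gp0 c : eps (gpC 0 c) = eps c.
Proof.
rewrite [in RHS](@gdecompS _ _ (cgr DC) c (undup (0 :: gsupp (cgr DC) c))) ?undup_uniq //; last first.
  by move=> i hi; rewrite mem_undup inE hi orbT.
rewrite eps_sum (bigD1_seq 0) ?undup_uniq ?mem_undup ?inE ?eqxx //= big1 ?addr0 //.
by move=> i hi; rewrite ceps_deg.
Qed.

Lemma eps_sg e c : eps (sgC e c) = eps c.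
Proof.
rewrite /gsign eps_sum [in RHS](gdecomp (cgr DC) c) eps_sum.
apply: eq_bigr => i _; rewrite epsZ; case: (i =P 0) => [->|/eqP hi].
  by rewrite mulr0 /= expr0 mul1r.
by rewrite ceps_deg // mulr0.
Qed.

Lemma hone_lin : islinear one.
Proof. by move=> a x y; rewrite /hone ceps_lin scalerDl scalerA. Qed.

Lemma hone_hom : homdeg DA DC 0 one.
Proof.
split; first exact: hone_lin.
move=> i c; rewrite addr0 /hone.
case: (i =P 0) => [->|/eqP hi].
  by rewrite eps_gp0 (linZ (gp_lin _ _)) agr_one.
rewrite ceps_deg // scale0r (linZ (gp_lin _ _)) -(agr_one DA) gproj_proj (negPf hi).
by rewrite scaler0.
Qed.

Lemma sgA1 : sgA 1 1 = 1.
Proof. by rewrite -{1}(agr_one DA) gsign_hom mulr0 /= expr0 scale1r agr_one. Qed.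

Lemma ad1 : ad DA 1 = 0.
Proof.
have := ad_leib DA 1 1; rewrite sgA1 !mulr1 mul1r => /esym H.
by apply: (@addrI _ (ad DA 1)); rewrite addr0 H.
Qed.

Lemma hd0_hone c : hd DA DC 0 one c = 0.
Proof.
rewrite /hd /hone (linZ (ad_lin DA)) ad1 scaler0 ceps_d /= expr0 scale1r scale0r.
by rewrite subr0.
Qed.

Lemma hom0_lin f : homdeg DA DC 0 f -> islinear f.
Proof. by case. Qed.

Lemma hom0_gp f i x : homdeg DA DC 0 f -> f (gpC i x) = gpA i (f x).
Proof. by case=> _ h; rewrite h addr0. Qed.

Lemma hom0_sg f e x : homdeg DA DC 0 f -> f (sgC e x) = sgA e (f x).
Proof.
move=> hf; set S := undup (gsupp (cgr DC) x ++ gsupp (agr DA) (f x)).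
have uS : uniq S by exact: undup_uniq.
have s1 : {subset gsupp (cgr DC) x <= S} by move=> i hi; rewrite mem_undup mem_cat hi.
have s2 : {subset gsupp (agr DA) (f x) <= S} by move=> i hi; rewrite mem_undup mem_cat hi orbT.
rewrite (@gsignS _ _ _ e x S) // (@gsignS _ _ _ e (f x) S) //.
rewrite (lin_sum (hom0_lin hf)); apply: eq_bigr => i _.
by rewrite (linZ (hom0_lin hf)) hom0_gp.
Qed.

Lemma sgA_hom e i x : sgA e (gpA i x) = (-1) ^+ absz (e * i) *: gpA i x.
Proof. exact: gsign_hom. Qed.

Lemma sgA_sum e (I : Type) (r : seq I) (F : I -> A) :
  sgA e (\sum_(i <- r) F i) = \sum_(i <- r) sgA e (F i).
Proof. exact: (lin_sum (gsign_lin (agr DA) e)). Qed.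

Lemma sgA_mul e a b : sgA e (a * b) = sgA e a * sgA e b.
Proof.
have E : a * b = \sum_(p <- gsupp (agr DA) a) \sum_(q <- gsupp (agr DA) b) gpA p a * gpA q b.
  rewrite {1}(gdecomp (agr DA) a) {1}(gdecomp (agr DA) b) mulr_suml.
  by apply: eq_bigr => p _; rewrite mulr_sumr.
rewrite E sgA_sum [sgA e a]/gsign [sgA e b]/gsign mulr_suml; apply: eq_bigr => p _.
rewrite sgA_sum mulr_sumr; apply: eq_bigr => q _.
rewrite -agr_mul sgA_hom agr_mul mulrDr sign_add -scalerAl -scalerAr scalerA.
by [].
Qed.

Section LinA.
Variables (f : C -> A).
Hypothesis hf : islinear f.
Lemma lA a x y : f (a *: x + y) = a *: f x + f y. Proof. exact: hf. Qed.
Lemma lA0 : f 0 = 0. Proof. exact: (lin0 hf). Qed.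
Lemma lAD x y : f (x + y) = f x + f y. Proof. exact: (linD hf x y). Qed.
Lemma lAZ a x : f (a *: x) = a *: f x. Proof. exact: (linZ hf a x). Qed.
Lemma lAB x y : f (x - y) = f x - f y. Proof. exact: (linB hf x y). Qed.
Lemma lA_sum (I : Type) (r : seq I) (F : I -> C) :
  f (\sum_(i <- r) F i) = \sum_(i <- r) f (F i).
Proof. exact: (lin_sum hf r predT F). Qed.
End LinA.

Lemma ad_sum (I : Type) (r : seq I) (F : I -> A) :
  ad DA (\sum_(i <- r) F i) = \sum_(i <- r) ad DA (F i).
Proof. exact: (lin_sum (ad_lin DA)). Qed.
Lemma gpA_sum n (I : Type) (r : seq I) (F : I -> A) :
  gpA n (\sum_(i <- r) F i) = \sum_(i <- r) gpA n (F i).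
Proof. exact: (lin_sum (gp_lin (agr DA) n)). Qed.

Definition bilin (W : lmodType k) (B : C -> C -> W) :=
  (forall a x y z, B (a *: x + y) z = a *: B x z + B y z) /\
  (forall a x y z, B z (a *: x + y) = a *: B z x + B z y).
Definition phi2 (W : lmodType k) (B : C -> C -> W) (s : seq C) : W :=
  if s is [:: a; b] then B a b else 0.
Definition Dsum (W : lmodType k) (B : C -> C -> W) c := \sum_(xy <- dl c) B xy.1 xy.2.

Lemma phi2_ml (W : lmodType k) (B : C -> C -> W) : bilin B -> multilinear (phi2 B).
Proof.
case=> h1 h2 l r a x y.
case: l => [|z [|w l]] /=.
- by case: r => [|b [|? ?]] /=; rewrite ?h1 ?scaler0 ?addr0.
- by case: r => [|b ?] /=; rewrite ?h2 ?scaler0 ?addr0.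
- by case: l => [|? ?] /=; rewrite scaler0 addr0.
Qed.

Lemma bl1 (W : lmodType k) (B : C -> C -> W) z : bilin B -> islinear (fun x => B x z).
Proof. by case=> h1 _ a x y; rewrite h1. Qed.
Lemma bl2 (W : lmodType k) (B : C -> C -> W) z : bilin B -> islinear (B z).
Proof. by case=> _ h2 a x y; rewrite h2. Qed.

Lemma tev_dtens (W : lmodType k) (B : C -> C -> W) c : tev (phi2 B) (dtens dl c) = Dsum B c.
Proof. by rewrite /tev /dtens big_map. Qed.

Lemma Dsum_lin (W : lmodType k) (B : C -> C -> W) : bilin B -> islinear (Dsum B).
Proof.
move=> hB a x y; have H := cdelta_lin DC a x y (phi2_ml hB).
apply: etrans (etrans (esym (tev_dtens B (a *: x + y))) H) _.
rewrite /tev big_cat !big_map /= /Dsum scaler_sumr.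
congr (_ + _); apply: eq_bigr => xy _; exact: (linZ (bl1 xy.2 hB)).
Qed.

Definition Bpq (W : lmodType k) (B : C -> C -> W) p q := fun a b => B (gpC p a) (gpC q b).

Lemma bilin_gp (W : lmodType k) (B : C -> C -> W) p q : bilin B -> bilin (Bpq B p q).
Proof. by case=> h1 h2; split=> a x y z; rewrite /Bpq gp_lin ?h1 ?h2. Qed.

Lemma Dsum_deg (W : lmodType k) (B : C -> C -> W) p q n c :
  bilin B -> p + q != n -> Dsum (Bpq B p q) (gpC n c) = 0.
Proof.
move=> hB hn; have := cdelta_deg DC c hn (phi2_ml hB).
by rewrite /tev big_map big_nil.
Qed.

Lemma Dsum_proj (W : lmodType k) (B : C -> C -> W) p q c :
  bilin B -> Dsum (Bpq B p q) c = Dsum (Bpq B p q) (gpC (p + q) c).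
Proof.
move=> hB.
rewrite {1}(@gdecompS _ _ (cgr DC) c (undup (p + q :: gsupp (cgr DC) c))) ?undup_uniq //;
  last by move=> i hi; rewrite mem_undup inE hi orbT.
rewrite (lin_sum (Dsum_lin (bilin_gp p q hB))).
rewrite (bigD1_seq (p + q)) ?undup_uniq ?mem_undup ?inE ?eqxx //= big1 ?addr0 //.
by move=> i hi; apply: Dsum_deg => //; rewrite eq_sym.
Qed.

Definition trilin (W : lmodType k) (T : C -> C -> C -> W) :=
  [/\ (forall a x y u v, T (a *: x + y) u v = a *: T x u v + T y u v),
      (forall a x y u v, T u (a *: x + y) v = a *: T u x v + T u y v) &
      (forall a x y u v, T u v (a *: x + y) = a *: T u v x + T u v y)].
Definition phi3 (W : lmodType k) (T : C -> C -> C -> W) (s : seq C) : W :=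
  if s is [:: a; b; c] then T a b c else 0.

Lemma phi3_ml (W : lmodType k) (T : C -> C -> C -> W) : trilin T -> multilinear (phi3 T).
Proof.
case=> h1 h2 h3 l r a x y.
case: l => [|z [|w [|u l]]] /=.
- by case: r => [|b [|c [|? ?]]] /=; rewrite ?h1 ?scaler0 ?addr0.
- by case: r => [|b [|? ?]] /=; rewrite ?h2 ?scaler0 ?addr0.
- by case: r => [|b ?] /=; rewrite ?h3 ?scaler0 ?addr0.
- by case: l => [|? ?] /=; rewrite scaler0 addr0.
Qed.

Lemma coassoc (W : lmodType k) (T : C -> C -> C -> W) c : trilin T ->
  \sum_(xy <- dl c) \sum_(z <- dl xy.1) T z.1 z.2 xy.2 =
  \sum_(xy <- dl c) \sum_(z <- dl xy.2) T xy.1 z.1 z.2.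
Proof.
move=> hT; have := cdelta_coass DC c (phi3_ml hT).
rewrite /tev !big_flatten /= !big_map => H.
transitivity (\sum_(xy <- dl c) \sum_(s <- [seq [:: z.1; z.2; xy.2] | z <- dl xy.1]) phi3 T s).
  by apply: eq_bigr => xy _; rewrite big_map.
rewrite H; apply: eq_bigr => xy _; by rewrite big_map.
Qed.

Lemma cup_bilin e (f g : C -> A) : islinear f -> islinear g ->
  bilin (fun a b => f (sgC e a) * g b).
Proof.
move=> hf hg; split => a x y z.
  by rewrite gsign_lin (lA hf) mulrDl scalerAl; reflexivity.
by rewrite (lA hg) mulrDr scalerAr; reflexivity.
Qed.

Lemma cup_lin e (f g : C -> A) : islinear f -> islinear g -> islinear (cup DC e f g).
Proof. by move=> hf hg; exact: (Dsum_lin (cup_bilin e hf hg)). Qed.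

Lemma cupE0 (f g : C -> A) c : cup DC 0 f g c = Dsum (fun a b => f a * g b) c.
Proof. by rewrite /cup /Dsum; apply: eq_bigr => xy _; rewrite gsign0. Qed.

Lemma cup_hom0 (f g : C -> A) : homdeg DA DC 0 f -> homdeg DA DC 0 g ->
  homdeg DA DC 0 (cup DC 0 f g).
Proof.
move=> hf hg; split; first exact: cup_lin (hom0_lin hf) (hom0_lin hg).
move=> n c; rewrite addr0 !cupE0.
set B := fun a b => f a * g b.
have hB : bilin B.
  split => a x y z; rewrite /B ?(lA (hom0_lin hf)) ?(lA (hom0_lin hg)).
    by rewrite mulrDl scalerAl; reflexivity.
  by rewrite mulrDr scalerAr; reflexivity.
set L := flatten [seq [:: xy.1; xy.2] | xy <- dl c ++ dl (gpC n c)].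
set S := cov (cgr DC) L.
have uS : uniq S by exact: cov_uniq.
have spl z : (z = c \/ z = gpC n c) ->
    Dsum B z = \sum_(p <- S) \sum_(q <- S) Dsum (Bpq B p q) z.
  move=> hz; rewrite /Dsum.
  transitivity (\sum_(xy <- dl z) \sum_(p <- S) \sum_(q <- S) B (gpC p xy.1) (gpC q xy.2)).
    apply: eq_big_seq => xy hxy.
    have mL : xy \in dl c ++ dl (gpC n c) by case: hz hxy => -> hxy; rewrite mem_cat hxy ?orbT.
    have m1 : xy.1 \in L by apply/flattenP; exists [:: xy.1; xy.2]; [exact: map_f | rewrite inE eqxx].
    have m2 : xy.2 \in L by apply/flattenP; exists [:: xy.1; xy.2]; [exact: map_f | rewrite !inE eqxx orbT].
    rewrite {1}(@gdecompS _ _ (cgr DC) xy.1 S uS (cov_sub m1)).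
    rewrite {1}(@gdecompS _ _ (cgr DC) xy.2 S uS (cov_sub m2)).
    rewrite (lin_sum (bl1 _ hB)); apply: eq_bigr => p _.
    by rewrite (lin_sum (bl2 _ hB)).
  rewrite exchange_big; apply: eq_bigr => p _; by rewrite exchange_big.
have homp p q : Dsum (Bpq B p q) c = gpA (p + q) (Dsum (Bpq B p q) c).
  rewrite /Dsum gpA_sum; apply: eq_bigr => xy _.
  by rewrite /Bpq /B !hom0_gp // agr_mul.
rewrite (spl (gpC n c)); last by right.
rewrite (spl c); last by left.
rewrite gpA_sum; apply: eq_bigr => p _; rewrite gpA_sum; apply: eq_bigr => q _.
rewrite homp gproj_proj -homp.
case: (n =P p + q) => [->|/eqP ne]; first by rewrite -Dsum_proj.
by apply: Dsum_deg => //; rewrite eq_sym.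
Qed.

Lemma cup_eq1 e (f f' g : C -> A) c : (forall x, f x = f' x) -> cup DC e f g c = cup DC e f' g c.
Proof. by move=> E; apply: eq_bigr => xy _; rewrite E. Qed.
Lemma cup_eq2 e (f g g' : C -> A) c : (forall x, g x = g' x) -> cup DC e f g c = cup DC e f g' c.
Proof. by move=> E; apply: eq_bigr => xy _; rewrite E. Qed.
Lemma cupBl e (F G h : C -> A) c :
  cup DC e (fun x => F x - G x) h c = cup DC e F h c - cup DC e G h c.
Proof. by rewrite /cup -sumrB; apply: eq_bigr => xy _; rewrite mulrBl. Qed.
Lemma cupBr e (f F G : C -> A) c :
  cup DC e f (fun x => F x - G x) c = cup DC e f F c - cup DC e f G c.
Proof. by rewrite /cup -sumrB; apply: eq_bigr => xy _; rewrite mulrBr. Qed.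

Lemma cup_one_l e (g : C -> A) c : islinear g -> cup DC e one g c = g c.
Proof.
move=> hg.
transitivity (g (\sum_(xy <- dl c) eps xy.1 *: xy.2)); last by rewrite counit_l.
rewrite (lA_sum hg); apply: eq_bigr => xy _.
by rewrite (lAZ hg) /hone eps_sg -scalerAl mul1r.
Qed.

Lemma cup0_one_r (f : C -> A) c : islinear f -> cup DC 0 f one c = f c.
Proof.
move=> hf.
transitivity (f (\sum_(xy <- dl c) eps xy.2 *: xy.1)); last by rewrite counit_r.
rewrite (lA_sum hf); apply: eq_bigr => xy _.
by rewrite (lAZ hf) /hone gsign0 -scalerAr mulr1.
Qed.

Lemma assoc_e e (f g h : C -> A) c : islinear f -> islinear g -> islinear h ->
  cup DC 0 (cup DC e f g) h c = cup DC e f (cup DC 0 g h) c.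
Proof.
move=> hf hg hh.
set T := fun a b d => f (sgC e a) * g b * h d.
have hT : trilin T.
  split => a0 x y u v; rewrite /T.
  - by rewrite gsign_lin (lA hf) !mulrDl -!scalerAl; reflexivity.
  - by rewrite (lA hg) mulrDr mulrDl -scalerAr -scalerAl; reflexivity.
  - by rewrite (lA hh) mulrDr -scalerAr; reflexivity.
transitivity (\sum_(xy <- dl c) \sum_(z <- dl xy.1) T z.1 z.2 xy.2).
  by apply: eq_bigr => xy _; rewrite gsign0 mulr_suml.
rewrite coassoc //; apply: eq_bigr => xy _; rewrite mulr_sumr; apply: eq_bigr => z _.
by rewrite gsign0 /T mulrA.
Qed.

Lemma assoc_s (f g h : C -> A) c : homdeg DA DC 0 f -> homdeg DA DC 0 g -> islinear h ->
  cup DC 1 f (cup DC 1 g h) c = cup DC 1 (cup DC 0 f g) h c.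
Proof.
move=> hf hg hh; have hfl := hom0_lin hf; have hgl := hom0_lin hg.
set T := fun a b d => f (sgC 1 a) * g (sgC 1 b) * h d.
have hT : trilin T.
  split => a0 x y u v; rewrite /T.
  - by rewrite gsign_lin (lA hfl) !mulrDl -!scalerAl; reflexivity.
  - by rewrite gsign_lin (lA hgl) mulrDr mulrDl -scalerAr -scalerAl; reflexivity.
  - by rewrite (lA hh) mulrDr -scalerAr; reflexivity.
transitivity (\sum_(xy <- dl c) \sum_(z <- dl xy.2) T xy.1 z.1 z.2).
  by apply: eq_bigr => xy _; rewrite mulr_sumr; apply: eq_bigr => z _; rewrite /T mulrA.
rewrite -coassoc //; apply: eq_bigr => xy _.
rewrite (hom0_sg _ _ (cup_hom0 hf hg)) /cup sgA_sum mulr_suml; apply: eq_bigr => z _.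
by rewrite gsign0 sgA_mul -(hom0_sg _ _ hf) -(hom0_sg _ _ hg).
Qed.

Lemma leib (f g : C -> A) c : homdeg DA DC 0 f -> islinear g ->
  hd DA DC 0 (cup DC 0 f g) c = cup DC 0 (hd DA DC 0 f) g c + cup DC 1 f (hd DA DC 0 g) c.
Proof.
move=> hf hg; have hfl := hom0_lin hf.
set B := fun a b => f a * g b.
have hB : bilin B.
  split => a x y z; rewrite /B ?(lA hfl) ?(lA hg).
    by rewrite mulrDl scalerAl; reflexivity.
  by rewrite mulrDr scalerAr; reflexivity.
have L1 : ad DA (cup DC 0 f g c) =
   \sum_(xy <- dl c) ad DA (f xy.1) * g xy.2 + \sum_(xy <- dl c) f (sgC 1 xy.1) * ad DA (g xy.2).
  rewrite /cup ad_sum -big_split; apply: eq_bigr => xy _.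
  by rewrite gsign0 ad_leib (hom0_sg _ _ hf).
have L2 : cup DC 0 f g (cd DC c) =
   \sum_(xy <- dl c) f (cd DC xy.1) * g xy.2 + \sum_(xy <- dl c) f (sgC 1 xy.1) * g (cd DC xy.2).
  rewrite cupE0; have H := cd_coder DC c (phi2_ml hB).
  apply: etrans (etrans (esym (tev_dtens B (cd DC c))) H) _.
  by rewrite /tev big_cat !big_map /=.
have R1 : cup DC 0 (hd DA DC 0 f) g c =
   \sum_(xy <- dl c) ad DA (f xy.1) * g xy.2 - \sum_(xy <- dl c) f (cd DC xy.1) * g xy.2.
  rewrite /cup -sumrB; apply: eq_bigr => xy _.
  by rewrite gsign0 /hd /= expr0 scale1r mulrBl.
have R2 : cup DC 1 f (hd DA DC 0 g) c =
   \sum_(xy <- dl c) f (sgC 1 xy.1) * ad DA (g xy.2) - \sum_(xy <- dl c) f (sgC 1 xy.1) * g (cd DC xy.2).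
  rewrite /cup -sumrB; apply: eq_bigr => xy _.
  by rewrite /hd /= expr0 scale1r mulrBr.
rewrite R1 R2 /hd /= expr0 scale1r L1 L2 opprD addrACA.
reflexivity.
Qed.

Lemma bilin_mul (f g : C -> A) : islinear f -> islinear g -> bilin (fun a b => f a * g b).
Proof.
move=> hf hg; split => a x y z; rewrite ?(lA hf) ?(lA hg).
  by rewrite mulrDl scalerAl; reflexivity.
by rewrite mulrDr scalerAr; reflexivity.
Qed.

Lemma Dsum_cone (W : lmodType k) (B : C -> C -> W) : bilin B -> Dsum B (cone DC) = B (cone DC) (cone DC).
Proof.
move=> hB; have H := cone_delta DC (phi2_ml hB).
apply: etrans (etrans (esym (tev_dtens B (cone DC))) H) _.
by rewrite /tev big_seq1.
Qed.

Lemma cpow_lin (f : C -> A) n : islinear f -> islinear (cpow DC f n).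
Proof. by move=> hf; elim: n => [|n IH] /=; [exact: hone_lin | exact: cup_lin]. Qed.

Lemma cpow_hom (f : C -> A) n : homdeg DA DC 0 f -> homdeg DA DC 0 (cpow DC f n).
Proof. by move=> hf; elim: n => [|n IH] /=; [exact: hone_hom | exact: cup_hom0]. Qed.

Lemma cpow_comm (f : C -> A) n c : islinear f ->
  cup DC 0 f (cpow DC f n) c = cup DC 0 (cpow DC f n) f c.
Proof.
move=> hf; elim: n c => [|n IH] c /=.
  by rewrite cup0_one_r // cup_one_l.
rewrite assoc_e //; try exact: cpow_lin.
by apply: cup_eq2 => x; rewrite IH.
Qed.

Definition split1 (s : seq C) : seq (seq C) :=
  match s with x :: r => [seq [:: z.1, z.2 & r] | z <- dl x] | [::] => [:: [::]] end.

Lemma diterS n c : diter DC n.+1 c = flatten (map split1 (diter DC n c)).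
Proof. by []. Qed.

Lemma diter_size n c : all (fun w => size w == n.+1) (diter DC n c).
Proof.
elim: n c => [|n IH] c /=; first by [].
apply/allP => w /flattenP [l /mapP [s hs ->] hw].
move/allP: (IH c) => /(_ s hs); case: s hs hw => [|x r] //= _ /mapP [z _ ->] /=.
by move/eqP => ->.
Qed.

Lemma diter_ne n c w : w \in diter DC n c -> w != [::].
Proof. by move=> hw; move/allP: (diter_size n c) => /(_ w hw); case: w hw. Qed.

Lemma split_cat v r : v != [::] -> split1 (v ++ r) = map (cat^~ r) (split1 v).
Proof. by case: v => [//|x v'] _ /=; rewrite -map_comp; apply: eq_map => z. Qed.

Definition fs j (w : seq C) : seq (seq C) :=
  match w with x :: r => [seq v ++ r | v <- diter DC j x] | [::] => [:: [::]] end.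

Lemma flat_flat (T1 T2 T3 : Type) (g : T2 -> seq T3) (h : T1 -> seq T2) (L : seq T1) :
  flatten (map g (flatten (map h L))) = flatten (map (fun w => flatten (map g (h w))) L).
Proof. by elim: L => [|a L IH] //=; rewrite map_cat flatten_cat IH. Qed.

Lemma diter_first j n c : diter DC (j + n) c = flatten (map (fs j) (diter DC n c)).
Proof.
elim: j => [|j IH].
  rewrite add0n -[LHS]flatten_seq1; congr flatten; apply: eq_map => w.
  by case: w => [|x r].
rewrite addSn diterS IH flat_flat; congr flatten; apply/eq_in_map => w hw.
case: w hw => [|x r] hw //=.
rewrite map_flatten -!map_comp; congr flatten; apply/eq_in_map => v hv /=.
by rewrite split_cat // (diter_ne hv).
Qed.

Definition Psi (F f : C -> A) (s : seq C) : A :=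
  if s is x :: r then F x * \prod_(y <- r) f y else 0.

Lemma Psi_ml (F f : C -> A) : islinear F -> islinear f -> multilinear (Psi F f).
Proof.
move=> hF hf l r a x y; case: l => [|z l] /=.
  by rewrite (lA hF) mulrDl scalerAl; reflexivity.
rewrite !big_cat !big_cons /= (lA hf) mulrDl !mulrDr -scalerAl -!scalerAr.
reflexivity.
Qed.

Lemma Psi_cat (F f : C -> A) v r : v != [::] ->
  Psi F f (v ++ r) = Psi F f v * \prod_(y <- r) f y.
Proof. by case: v => [//|x v'] _ /=; rewrite big_cat mulrA. Qed.

Lemma cpow_diter (f : C -> A) n c : islinear f ->
  cpow DC f n.+1 c = tev (Psi f f) (diter DC n c).
Proof.
move=> hf; elim: n c => [|n IH] c.
  by rewrite /= cup0_one_r // /tev big_seq1 /= big_nil mulr1.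
rewrite -[n.+1]addn1 diter_first /tev big_flatten /=.
rewrite cpow_comm; last exact: hf.
rewrite cats0 !big_map /cup; apply: eq_bigr => xy _ /=.
rewrite big_map gsign0 addn1 IH /tev mulr_suml.
apply: eq_big_seq => v hv.
by rewrite Psi_cat ?big_seq1 // (diter_ne hv).
Qed.

Lemma cpow_cone (f : C -> A) j : islinear f -> f (cone DC) = 0 -> cpow DC f j.+1 (cone DC) = 0.
Proof.
move=> hf f0; rewrite /= cupE0 (Dsum_cone (bilin_mul hf (cpow_lin j hf))) f0 mul0r.
by [].
Qed.

Lemma pi_inv (F : C -> A) x : islinear F -> F (cone DC) = 0 -> F (x - eps x *: cone DC) = F x.
Proof. by move=> hF F0; rewrite (lAB hF) (lAZ hF) F0 scaler0 subr0. Qed.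

Lemma cpow_vanish (f : C -> A) c : islinear f -> f (cone DC) = 0 -> cocomplete DC ->
  exists N, forall M, (N <= M)%N -> cpow DC f M c = 0.
Proof.
move=> hf f0 hcc; case: (hcc c) => N0 HN.
exists N0.+1 => M hM.
have -> : M = ((M - N0.+1) + N0).+1 by lia.
set j := (M - N0.+1)%N.
rewrite (cpow_diter _ _ hf) diter_first /tev big_flatten /= big_map.
set G := cpow DC f j.+1.
have hG : islinear G by exact: cpow_lin.
have G0 : G (cone DC) = 0 by exact: cpow_cone.
transitivity (tev (Psi G f) (diter DC N0 c)).
  rewrite /tev; apply: eq_big_seq => w hw; case: w hw => [|x r] hw; first by have := diter_ne hw.
  rewrite /= big_map /G (cpow_diter _ _ hf) /tev mulr_suml; apply: eq_big_seq => v hv.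
  by rewrite Psi_cat // (diter_ne hv).
have := HN _ (Psi G f) (Psi_ml hG hf); rewrite /tev big_map big_nil => H.
rewrite -[RHS]H /tev; apply: eq_big_seq => w hw; case: w hw => [|x r] hw; first by have := diter_ne hw.
rewrite /= (pi_inv _ hG G0) big_map; congr (_ * _); apply: eq_bigr => y _.
by rewrite (pi_inv _ hf f0).
Qed.

Lemma hd_lin (g : C -> A) : islinear g -> islinear (hd DA DC 0 g).
Proof.
move=> hg a x y; rewrite /hd /= expr0 !scale1r (cd_lin DC) !(lA hg) (ad_lin DA).
by rewrite scalerBr opprD addrACA; reflexivity.
Qed.

Lemma gpAB i x y : gpA i (x - y) = gpA i x - gpA i y.
Proof. exact: (linB (gp_lin (agr DA) i)). Qed.

End Main.

Unset Implicit Arguments.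
Set Strict Implicit.

Theorem lemma2p2 (k : comNzRingType) (A : algType k) (DA : dga A)
  (I : A -> Prop) (C : lmodType k) (DC : dgc C) :
  dg_ideal DA I -> cocomplete DC ->
  (forall t, twisting DA DC t -> atriv_homotopy DA DC I t t (hone A DC)) /\
  (forall t u v h h', twisting DA DC t -> twisting DA DC u -> twisting DA DC v ->
     atriv_homotopy DA DC I t u h -> atriv_homotopy DA DC I u v h' ->
     atriv_homotopy DA DC I t v (cup DC 0 h h')) /\
  (forall t u h, twisting DA DC t -> twisting DA DC u ->
     atriv_homotopy DA DC I t u h ->
     exists g : C -> A,
       [/\ homdeg DA DC 0 g,
           (forall c, cup DC 0 h g c = hone A DC c),
           (forall c, cup DC 0 g h c = hone A DC c),
           (forall c, exists N : nat, forall M : nat, (N <= M)%N ->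
              g c = \sum_(n < M) cpow DC (fun x => hone A DC x - h x) n c) &
           atriv_homotopy DA DC I u t g]).
Proof.
move=> hI hcc.
case: hI => I0 [Ilin [IL [IR _]]].
have Iadd x y : I x -> I y -> I (x + y).
  by move=> hx hy; have := Ilin 1 x y hx hy; rewrite scale1r.
have Iopp x : I x -> I (- x).
  by move=> hx; have := Ilin (-1) x 0 hx I0; rewrite addr0 scaleN1r.
have Isum (J : Type) (r : seq J) (F : J -> A) : (forall j, I (F j)) -> I (\sum_(j <- r) F j).
  by move=> hF; elim: r => [|j r IH]; rewrite ?big_nil ?big_cons //; apply: (Iadd).
split.
  move=> t [[htl _] _ _ _]; split; last by move=> c; rewrite subrr.
  split.
  - exact: hone_hom.
  - by move=> c; rewrite hd0_hone cup0_one_r // cup_one_l // subrr.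
  - by move=> c; rewrite /hone aep_alg.
  - by move=> a; rewrite /hone epsZ cone_eps mulr1.
split.
  move=> t u v h h' [[htl _] _ _ _] [[hul _] _ _ _] [[hvl _] _ _ _].
  move=> [[hh dh eh ch] ah] [[hh' dh' eh' ch'] ah'].
  have hhl := hom0_lin hh; have hh'l := hom0_lin hh'.
  have hc : h (cone DC) = 1 by have := ch 1; rewrite !scale1r.
  have hc' : h' (cone DC) = 1 by have := ch' 1; rewrite !scale1r.
  split; first split.
  - exact: cup_hom0.
  - move=> c; rewrite leib // (cup_eq1 _ _ _ _ dh) (cup_eq2 _ _ _ _ dh') cupBl cupBr.
    rewrite (assoc_e _ 0 _ htl hhl hh'l) (assoc_e _ 1 _ hhl hul hh'l) (assoc_s _ hh hh' hvl).
    by rewrite addrA subrK.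
  - move=> c; transitivity (ceps DC (\sum_(xy <- cdelta DC c) ceps DC xy.1 *: xy.2)); last by rewrite counit_l.
    rewrite /cup aep_sum eps_sum; apply: eq_bigr => xy _.
    by rewrite gsign0 aeps_mul eh eh' epsZ.
  - move=> a; rewrite (lAZ (cup_lin _ 0 hhl hh'l)) cupE0 (Dsum_cone _ (bilin_mul hhl hh'l)) hc hc' mulr1.
    by [].
  - move=> c.
    have E : cup DC 0 h h' c = cup DC 0 (fun x => h x - hone A DC x) h' c + cup DC 0 (hone A DC) h' c.
      by rewrite cupBl subrK.
    rewrite E cup_one_l // -addrA; apply: (Iadd); last exact: ah'.
    rewrite /cup; apply: (Isum) => xy; apply: (IR); exact: ah.
move=> t u h [[htl _] _ _ _] [[hul _] _ _ _] [[hh dh eh ch] ah].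
have hhl := hom0_lin hh.
have hc : h (cone DC) = 1 by have := ch 1; rewrite !scale1r.
pose f := fun x => hone A DC x - h x.
have hfh : homdeg DA DC 0 f.
  split.
    move=> a x y; rewrite /f hone_lin (lA hhl) scalerBr opprD addrACA; reflexivity.
  move=> i c; rewrite addr0 /f (hom0_gp _ _ (hone_hom DA DC)) (hom0_gp _ _ hh) gpAB.
  by [].
have hfl := hom0_lin hfh.
have f0 : f (cone DC) = 0 by rewrite /f hc /hone cone_eps scale1r subrr.
have hv c := cpow_vanish c hfl f0 hcc.
pose Nf c := proj1_sig (constructive_indefinite_description _ (hv c)).
have HN c M : (Nf c <= M)%N -> cpow DC f M c = 0.
  exact: (proj2_sig (constructive_indefinite_description _ (hv c)) M).
pose g c := \sum_(n < Nf c) cpow DC f n c.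
have gE c M : (Nf c <= M)%N -> g c = \sum_(n < M) cpow DC f n c.
  move=> hM; rewrite /g -(big_mkord xpredT (fun n => cpow DC f n c)).
  rewrite -(big_mkord xpredT (fun n => cpow DC f n c)).
  rewrite (@big_cat_nat _ _ _ (Nf c) 0 M _ _ (leq0n _) hM) /= [X in _ = _ + X]big1_seq ?addr0 //.
  move=> n /andP[_]; rewrite mem_index_iota => /andP[hn _]; exact: HN.
have gEs c : g c = hone A DC c + \sum_(i < Nf c) cpow DC f i.+1 c.
  rewrite (gE c (Nf c).+1) // big_ord_recl; congr (_ + _).
exists g.
have g_lin : islinear g.
  move=> a x y; set M := maxn (Nf (a *: x + y)) (maxn (Nf x) (Nf y)).
  rewrite (gE (a *: x + y) M) ?leq_maxl // (gE x M); last exact: (leq_trans (leq_maxl _ _) (leq_maxr _ _)).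
  rewrite (gE y M); last exact: (leq_trans (leq_maxr _ _) (leq_maxr _ _)).
  rewrite scaler_sumr -big_split; apply: eq_bigr => n _; exact: (lA (cpow_lin _ n hfl)).
have g_hom : homdeg DA DC 0 g.
  split => // i c; set M := maxn (Nf (gproj (cgr DC) i c)) (Nf c).
  rewrite addr0 (gE _ M) ?leq_maxl // (gE c M) ?leq_maxr // gpA_sum.
  apply: eq_bigr => n _; exact: (hom0_gp _ _ (cpow_hom n hfh)).
have Eh x : h x = hone A DC x - f x by rewrite /f opprB addrC subrK.
have tel M c : (Nf c <= M)%N ->
    \sum_(n < M) (cpow DC f n c - cpow DC f n.+1 c) = hone A DC c.
  move=> hM; rewrite -(big_mkord xpredT (fun n => cpow DC f n c - cpow DC f n.+1 c)).
  rewrite (telescope_sumr_eq (fun n => - cpow DC f n c)) ?leq0n //.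
    by rewrite (HN c M hM) oppr0 sub0r opprK.
  by move=> n _; rewrite opprK addrC.
have hg_one c : cup DC 0 h g c = hone A DC c.
  set M := maxn (Nf c) (\max_(xy <- cdelta DC c) Nf xy.2).
  transitivity (\sum_(n < M) cup DC 0 h (cpow DC f n) c).
    rewrite /cup; transitivity (\sum_(xy <- cdelta DC c) \sum_(n < M)
        h (gsign (cgr DC) 0 xy.1) * cpow DC f n xy.2).
      apply: eq_big_seq => xy hxy; rewrite (gE xy.2 M) ?mulr_sumr //.
      apply: leq_trans (leq_maxr _ _); exact: (@leq_bigmax_seq _ _ xpredT (fun xy => Nf xy.2) xy hxy).
    by rewrite exchange_big.
  rewrite -(tel M c) ?leq_maxl //; apply: eq_bigr => n _.
  rewrite (cup_eq1 _ _ _ _ Eh) cupBl (cup_one_l _ _ _ (cpow_lin _ n hfl)).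
  reflexivity.
have gh_one c : cup DC 0 g h c = hone A DC c.
  set M := maxn (Nf c) (\max_(xy <- cdelta DC c) Nf xy.1).
  transitivity (\sum_(n < M) cup DC 0 (cpow DC f n) h c).
    rewrite /cup; transitivity (\sum_(xy <- cdelta DC c) \sum_(n < M)
        cpow DC f n (gsign (cgr DC) 0 xy.1) * h xy.2).
      apply: eq_big_seq => xy hxy; rewrite !gsign0 (gE xy.1 M) ?mulr_suml //.
      apply: leq_trans (leq_maxr _ _); exact: (@leq_bigmax_seq _ _ xpredT (fun xy => Nf xy.1) xy hxy).
    by rewrite exchange_big.
  rewrite -(tel M c) ?leq_maxl //; apply: eq_bigr => n _.
  rewrite (cup_eq2 _ _ _ _ Eh) cupBr (cup0_one_r _ _ (cpow_lin _ n hfl)) -(cpow_comm _ n c hfl).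
  reflexivity.
have hdl := hd_lin DA DC g_lin.
have hugl : islinear (cup DC 0 u g) by exact: cup_lin.
have Lb x : cup DC 1 h (hd DA DC 0 g) x = cup DC 1 h (cup DC 0 u g) x - t x.
  have e1 : hd DA DC 0 (cup DC 0 h g) x = 0.
    by rewrite /hd !hg_one; exact: (hd0_hone DA DC x).
  have := leib x hh g_lin.
  rewrite e1 (cup_eq1 _ _ _ _ dh) cupBl (assoc_e _ 0 _ htl hhl g_lin) (assoc_e _ 1 _ hhl hul g_lin).
  rewrite (cup_eq2 _ _ _ _ hg_one) (cup0_one_r _ _ htl).
  move/esym/eqP; rewrite addrC addr_eq0 => /eqP ->; by rewrite opprB.
have aepS i x : aeps DA (cpow DC f i.+1 x) = 0.
  rewrite /= /cup aep_sum big1 // => xy _.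
  by rewrite aeps_mul /f aepB eh /hone aep_alg subrr mul0r.
split => //.
- by move=> c; exists (Nf c) => M hM; exact: gE.
split; last first.
  move=> c; rewrite gEs addrAC subrr add0r; apply: (Isum) => i.
  rewrite /= /cup; apply: (Isum) => xy; apply: (IR); rewrite /f -opprB; apply: (Iopp); exact: ah.
split.
- exact: g_hom.
- move=> c.
  rewrite -(cup_one_l DC 1 c hdl) -(cup_eq1 _ _ _ _ gh_one) -(assoc_s _ g_hom hh hdl).
  rewrite (cup_eq2 _ _ _ _ Lb) cupBr (assoc_s _ g_hom hh hugl) (cup_eq1 _ _ _ _ gh_one).
  by rewrite (cup_one_l _ _ _ hugl).
- move=> c; rewrite gEs aep_add aep_sum big1 ?addr0 /hone ?aep_alg // => i _; exact: aepS.
- move=> a; rewrite gEs big1 ?addr0 /hone ?epsZ ?cone_eps ?mulr1 // => i _.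
  by rewrite (lAZ (cpow_lin _ _ hfl)) (cpow_cone _ hfl f0) scaler0.
Qed.
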